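(* Let $B$ be a Noetherian ring of dimension $d$, let $(b_1,\ldots,b_n)\in\operatorname{Um}_n(B)$ with $n\ge2$, and let $y\in B$ satisfy $Bb_1+By=B$. Then for any finite family of prime ideals $\nu_1,\ldots,\nu_p\subset B$ there exist an element $b\in Bb_2+\cdots+Bb_n$ and an infinite sequence of natural numbers $c_1<c_2<\cdots$ such that $b_1+by^{c_j}\notin\nu_i$ for all $i=1,\ldots,p$ and all $j=1,2,\ldots$.
   Context: Rings are commutative with unit. $\operatorname{Um}_n(B)$ is the set of rows $(b_1,\ldots,b_n)\in B^n$ with $Bb_1+\cdots+Bb_n=B$. *)

(* Defs.v *)
From mathcomp Require Import all_boot all_order all_algebra.
Set Implicit Arguments. Unset Strict Implicit. Unset Printing Implicit Defensive.
Import GRing.Theory.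
Local Open Scope ring_scope.

Definition is_ideal (R : comNzRingType) (I : R -> Prop) : Prop :=
  [/\ I 0, (forall x y, I x -> I y -> I (x + y)) & (forall a x, I x -> I (a * x))].

Definition is_prime_ideal (R : comNzRingType) (P : R -> Prop) : Prop :=
  [/\ is_ideal P, ~ P 1 & (forall x y, P (x * y) -> P x \/ P y)].

Definition noetherian (R : comNzRingType) : Prop :=
  forall I : nat -> R -> Prop,
    (forall k, is_ideal (I k)) ->
    (forall k x, I k x -> I k.+1 x) ->
    exists N, forall k, (N <= k)%N -> forall x, I k x <-> I N x.

Definition prime_chain (R : comNzRingType) (k : nat) (P : nat -> R -> Prop) : Prop :=
  (forall i, (i <= k)%N -> is_prime_ideal (P i)) /\
  (forall i, (i < k)%N ->
     (forall x, P i x -> P i.+1 x) /\ exists x, P i.+1 x /\ ~ P i x).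

Definition krull_dim (R : comNzRingType) (d : nat) : Prop :=
  (exists P, prime_chain (R:=R) d P) /\
  (forall k P, prime_chain (R:=R) k P -> (k <= d)%N).

(* Main.v *)
Require Import Defs.
From mathcomp Require Import all_boot all_order all_algebra.
From mathcomp Require Import ring.
From Stdlib Require Import Classical.
Set Implicit Arguments. Unset Strict Implicit.
Import GRing.Theory.
Local Open Scope ring_scope.

Section Aux.
Variable B : comNzRingType.
Implicit Types (I P : B -> Prop).

Lemma idl0 I : is_ideal I -> I 0. Proof. by case. Qed.
Lemma idlD I x z : is_ideal I -> I x -> I z -> I (x + z).
Proof. by case=> _ H _; apply: H. Qed.
Lemma idlM I a x : is_ideal I -> I x -> I (a * x).
Proof. by case=> _ _ H; apply: H. Qed.
Lemma idlMr I a x : is_ideal I -> I x -> I (x * a).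
Proof. by move=> h hx; rewrite mulrC; apply: idlM. Qed.
Lemma idlN I x : is_ideal I -> I x -> I (- x).
Proof. by move=> h hx; rewrite -mulN1r; apply: idlM. Qed.
Lemma idlB I x z : is_ideal I -> I x -> I z -> I (x - z).
Proof. by move=> h hx hz; apply: idlD => //; apply: idlN. Qed.
Lemma idlDr I x z : is_ideal I -> I x -> I (x + z) -> I z.
Proof.
move=> h hx hxz; have -> : z = (x + z) - x by ring.
exact: idlB.
Qed.

Lemma pow_notin P y k : is_prime_ideal P -> ~ P y -> ~ P (y ^+ k).
Proof.
case=> hI h1 hpr hy; elim: k => [|k IH]; first by rewrite expr0.
by rewrite exprS => /hpr [].
Qed.

Lemma pow_sub1 P (y : B) m t : is_ideal P -> P (y ^+ m - 1) -> P (y ^+ (m * t) - 1).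
Proof.
move=> hI hm; elim: t => [|t IH]; first by rewrite muln0 expr0 subrr; apply: idl0.
rewrite mulnS exprD.
have -> : y ^+ m * y ^+ (m * t) - 1 = y ^+ (m * t) * (y ^+ m - 1) + (y ^+ (m * t) - 1) by ring.
by apply: idlD => //; apply: idlM.
Qed.

Lemma per_prime P (b1 bb y u v : B) : is_prime_ideal P -> u * b1 + v * y = 1 ->
  (~ P y -> ~ P (b1 + bb)) ->
  exists m K, (0 < m)%N /\ forall c, (K <= c)%N -> (m %| c)%N -> ~ P (b1 + bb * y ^+ c).
Proof.
move=> hPP huv hb; have [hI h1 hpr] := hPP.
case: (classic (P y)) => hy.
  exists 1%N, 1%N; split => // c hc _ hf; apply: h1.
  have hyc : P (y ^+ c) by rewrite -(prednK hc) exprS; apply: idlMr.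
  have hb1 : P b1.
    have -> : b1 = (b1 + bb * y ^+ c) - bb * y ^+ c by ring.
    by apply: idlB => //; apply: idlM.
  by rewrite -huv; apply: idlD => //; apply: idlM.
case: (classic (exists m, (0 < m)%N /\ P (y ^+ m - 1))) => [[m [hm hPm]]|hno].
  exists m, 0%N; split => // c _ /dvdnP [t ->] hf.
  have hc : P (y ^+ (t * m) - 1) by rewrite mulnC; apply: pow_sub1.
  apply: (hb hy).
  have -> : b1 + bb = (b1 + bb * y ^+ (t * m)) - bb * (y ^+ (t * m) - 1) by ring.
  by apply: idlB => //; apply: idlM.
case: (classic (exists c0, P (b1 + bb * y ^+ c0))) => [[c0 hc0]|hnone]; last first.
  by exists 1%N, 0%N; split => // c _ _ hf; apply: hnone; exists c.
exists 1%N, c0.+1; split => // c hc _ hf.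
have hc' : y ^+ c = y ^+ c0 * y ^+ (c - c0) by rewrite -exprD subnKC // ltnW.
have : P (bb * y ^+ c0 * (y ^+ (c - c0) - 1)).
  have -> : bb * y ^+ c0 * (y ^+ (c - c0) - 1) =
     (b1 + bb * y ^+ c) - (b1 + bb * y ^+ c0) by rewrite hc'; ring.
  exact: idlB.
case/hpr => [|hk]; last by apply: hno; exists (c - c0)%N; split => //; rewrite subn_gt0.
case/hpr => [hbb|hyc0]; last exact: (pow_notin hPP hy hyc0).
apply: (hb hy).
have -> : b1 + bb = (b1 + bb * y ^+ c0) + bb * (1 - y ^+ c0) by ring.
by apply: idlD => //; apply: idlMr.
Qed.

Lemma combine (G : nat -> nat -> Prop) k :
  (forall i, (1 <= i <= k)%N -> exists m K, (0 < m)%N /\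
      forall c, (K <= c)%N -> (m %| c)%N -> G i c) ->
  exists N K, (0 < N)%N /\ forall i, (1 <= i <= k)%N ->
      forall c, (K <= c)%N -> (N %| c)%N -> G i c.
Proof.
elim: k => [|k IH] h.
  by exists 1%N, 0%N; split => // i /andP [h1 h2]; move: (leq_trans h1 h2).
have [|N [K [hN hG]]] := IH.
  by move=> i /andP [h1 h2]; apply: h; rewrite h1 leqW.
have [|m [K' [hm hG']]] := h k.+1; first by rewrite /= leqnn.
exists (N * m)%N, (K + K')%N; split; first by rewrite muln_gt0 hN hm.
move=> i /andP [h1 h2] c hc hd.
rewrite leq_eqVlt in h2; case/orP: h2 => [/eqP ->|h2].
  apply: hG'; first exact: leq_trans (leq_addl _ _) hc.
  exact: dvdn_trans (dvdn_mull _ (dvdnn m)) hd.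
apply: hG; first by rewrite h1.
  exact: leq_trans (leq_addr _ _) hc.
exact: dvdn_trans (dvdn_mulr _ (dvdnn N)) hd.
Qed.

Lemma prodl P (Ps : nat -> B -> Prop) (S : nat -> Prop) k :
  is_prime_ideal P -> (forall i, S i -> is_ideal (Ps i)) ->
  (forall i, (i < k)%N -> S i -> exists q, Ps i q /\ ~ P q) ->
  exists q, (forall i, (i < k)%N -> S i -> Ps i q) /\ ~ P q.
Proof.
move=> [hI h1 hpr] hS; elim: k => [|k IH] h.
  by exists 1; split => // i; rewrite ltn0.
have [|q [hq hqP]] := IH; first by move=> i hi; apply: h; apply: leqW.
case: (classic (S k)) => hSk; last first.
  exists q; split => // i; rewrite ltnS leq_eqVlt => /orP [/eqP -> //|hi].
  exact: hq.
have [qk [hqk hqkP]] := h k (leqnn _) hSk.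
exists (q * qk); split; last by case/hpr.
move=> i; rewrite ltnS leq_eqVlt => /orP [/eqP -> _|hi hSi].
  by apply: idlM => //; apply: hS.
by apply: idlMr; [apply: hS | apply: hq].
Qed.

Lemma avoid (J : B -> Prop) (b1 : B) : is_ideal J ->
  (exists r j0, J j0 /\ r * b1 + j0 = 1) ->
  forall k (Ps : nat -> B -> Prop) (S : nat -> Prop),
  (forall i, S i -> is_prime_ideal (Ps i)) ->
  exists x, J x /\ forall i, (i < k)%N -> S i -> ~ Ps i (b1 + x).
Proof.
move=> hJ [r [j0 [hj0 hr]]] k; elim: k => [|k IH] Ps S hS.
  by exists 0; split; [apply: idl0|].
case: (classic (S k)) => hSk; last first.
  have [x [hx hxP]] := IH Ps S hS.
  exists x; split => // i; rewrite ltnS leq_eqVlt => /orP [/eqP -> //|hi].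
  exact: hxP.
have hPP := hS k hSk.
have [hPI hP1 hPpr] := hPP.
have [x [hx hxP]] := IH Ps (fun i => S i /\ ~ (forall z, Ps i z -> Ps k z))
   (fun i h => hS i h.1).
suff [x' [hx' [hPx' hx'P]]] : exists x', J x' /\ ~ Ps k (b1 + x') /\
   forall i, (i < k)%N -> S i -> (~ forall z, Ps i z -> Ps k z) -> ~ Ps i (b1 + x').
  exists x'; split => // i; rewrite ltnS leq_eqVlt => /orP [/eqP -> //|hi] hSi.
  case: (classic (forall z, Ps i z -> Ps k z)) => hsub; last exact: hx'P.
  by move=> hin; apply: hPx'; apply: hsub.
case: (classic (Ps k (b1 + x))) => hbx; last first.
  exists x; split => //; split => // i hi hSi hns; exact: hxP i hi (conj hSi hns).
have [j [hj hjP]] : exists j, J j /\ ~ Ps k j.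
  case: (classic (Ps k j0)) => h0; last by exists j0.
  case: (classic (Ps k x)) => h1; last by exists x.
  exfalso; apply: hP1; rewrite -hr; apply: idlD => //; apply: idlM => //.
  have -> : b1 = (b1 + x) - x by ring.
  exact: idlB.
have [||q [hq hqP]] := (prodl (S := fun i => S i /\ ~ (forall z, Ps i z -> Ps k z)) (k := k) (Ps := Ps) hPP _ _).
    by move=> i h; case: (hS i h.1).
  move=> i hi [hSi hn]; apply: NNPP => hne; apply: hn => z hz.
  by apply: NNPP => hPz; apply: hne; exists z.
exists (x + q * j); split; first by apply: idlD => //; apply: idlM.
split.
  rewrite addrA => hin; have := idlDr hPI hbx hin.
  by case/hPpr.
move=> i hi hSi hn hin.
have hPi : is_ideal (Ps i) by case: (hS i hSi).
have hqj : Ps i (q * j) by apply: idlMr => //; apply: hq.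
apply: (hxP i hi (conj hSi hn)).
have -> : b1 + x = (b1 + (x + q * j)) - q * j by ring.
exact: idlB.
Qed.

End Aux.

Theorem corollary7p2 (B : comNzRingType) (d : nat) (n : nat) (b : nat -> B) (y : B)
  (p : nat) (nu : nat -> B -> Prop) :
  noetherian B -> krull_dim B d ->
  (2 <= n)%N ->
  (exists a : nat -> B, \sum_(1 <= i < n.+1) a i * b i = 1) ->
  (exists u v : B, u * b 1%N + v * y = 1) ->
  (forall i, (1 <= i <= p)%N -> is_prime_ideal (nu i)) ->
  exists bb : B,
    (exists a : nat -> B, bb = \sum_(2 <= i < n.+1) a i * b i) /\
    exists c : nat -> nat,
      (forall j, (c j < c j.+1)%N) /\
      (forall i j, (1 <= i <= p)%N -> ~ nu i (b 1%N + bb * y ^+ c j)).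
Proof.
move=> _ _ hn [a ha] [u [v huv]] hnu.
pose J := fun x => exists a : nat -> B, x = \sum_(2 <= i < n.+1) a i * b i.
have hJ : is_ideal J.
  split.
  - by exists (fun _ => 0); rewrite big1 // => i _; rewrite mul0r.
  - move=> x z [a1 ->] [a2 ->]; exists (fun i => a1 i + a2 i).
    by rewrite -big_split /=; apply: eq_bigr => i _; rewrite mulrDl.
  - move=> r x [a1 ->]; exists (fun i => r * a1 i).
    by rewrite mulr_sumr; apply: eq_bigr => i _; rewrite mulrA.
have hj0 : exists r j0, J j0 /\ r * b 1%N + j0 = 1.
  exists (a 1%N), (\sum_(2 <= i < n.+1) a i * b i); split; first by exists a.
  rewrite -ha (big_ltn (m := 1%N)) //.
  exact: leq_trans hn (leqnSn n).
have [bb [hbbJ hbb]] := avoid hJ hj0 p.+1 (Ps := nu)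
   (S := fun i => (1 <= i <= p)%N /\ ~ nu i y) (fun i h => hnu i h.1).
exists bb; split; first exact: hbbJ.
have [N [K [hN hG]]] := combine (G := fun i c => ~ nu i (b 1%N + bb * y ^+ c)) (k := p)
  (fun i hi => per_prime (bb := bb) (hnu i hi) huv
     (fun hy => hbb i ltac:(by rewrite ltnS; case/andP: hi) (conj hi hy))).
exists (fun j => N * (j + K))%N; split.
  by move=> j; rewrite ltn_pmul2l // addSn ltnSn.
move=> i j hi; apply: hG => //.
  exact: leq_trans (leq_addl j K) (leq_pmull _ hN).
exact: dvdn_mulr _ (dvdnn N).
Qed.
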